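(* Let $(\mathcal A;\mathcal E)$ be an exact category and let $\mathcal J_1,\mathcal J_2$ be ideals of $\mathcal A$. If $\mathcal J_1$ and $\mathcal J_2$ are monic preenveloping, then so are $\mathcal J_1\cap\mathcal J_2$ and $\mathcal J_1+\mathcal J_2$. Dually, if $\mathcal J_1$ and $\mathcal J_2$ are epic precovering, then so are $\mathcal J_1\cap\mathcal J_2$ and $\mathcal J_1+\mathcal J_2$.
   Context: An exact category $(\mathcal A;\mathcal E)$ (in the sense of Quillen/Keller/Bühler) is an additive category $\mathcal A$ with a class $\mathcal E$ of kernel–cokernel pairs $B\xrightarrow{m}C\xrightarrow{p}A$, called conflations ($m$ an inflation, $p$ a deflation), closed under isomorphism, containing identities as inflations/deflations, with inflations and deflations closed under composition, and with pushouts of inflations along arbitrary morphisms existing and being inflations (dually for pullbacks of deflations). An ideal $\mathcal J$ of $\mathcal A$ is a family of subgroups $\mathcal J(A,B)\subseteq\mathrm{Hom}(A,B)$ closed under composition on either side with arbitrary morphisms; $\mathcal J_1\cap\mathcal J_2$ and $\mathcal J_1+\mathcal J_2$ are formed objectwise. $\mathcal J$ is preenveloping if every object $B$ has a $\mathcal J$-preenvelope: a morphism $j:B\to J$ in $\mathcal J$ through which every morphism in $\mathcal J$ with domain $B$ factors. $\mathcal J$ is monic preenveloping if every object $B$ admits a $\mathcal J$-preenvelope that is an inflation. Dually, $\mathcal I$ is epic precovering if every object admits an $\mathcal I$-precover (a morphism in $\mathcal I$ into it through which every morphism of $\mathcal I$ into it factors) that is a deflation. *)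

(* Defs.v *)
From HB Require Import structures.
From mathcomp Require Import all_boot all_algebra.
Set Implicit Arguments. Unset Strict Implicit. Unset Printing Implicit Defensive.
Import GRing.Theory.
Local Open Scope ring_scope.

Record PreaddCat := {
  Ob : Type;
  Hom : Ob -> Ob -> zmodType;
  comp : forall A B C : Ob, Hom B C -> Hom A B -> Hom A C;
  idm : forall A : Ob, Hom A A;
  compA : forall A B C D (h : Hom C D) (g : Hom B C) (f : Hom A B),
      comp h (comp g f) = comp (comp h g) f;
  comp1m : forall A B (f : Hom A B), comp (idm B) f = f;
  compm1 : forall A B (f : Hom A B), comp f (idm A) = f;
  compDl : forall A B C (g g' : Hom B C) (f : Hom A B),
      comp (g + g') f = comp g f + comp g' f;
  compDr : forall A B C (g : Hom B C) (f f' : Hom A B),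
      comp g (f + f') = comp g f + comp g f'
}.

Arguments comp {p A B C} _ _.
Arguments idm {p} A.
Arguments Hom : clear implicits.

Section Basics.
Variable C : PreaddCat.
Local Notation Obj := (Ob C).
Local Notation Hm := (Hom C).

Definition is_iso (A B : Obj) (f : Hm A B) : Prop :=
  exists g : Hm B A, comp g f = idm A /\ comp f g = idm B.

Definition is_kernel (B X A : Obj) (m : Hm B X) (p : Hm X A) : Prop :=
  comp p m = 0 /\
  forall (T : Obj) (x : Hm T X), comp p x = 0 ->
    exists y : Hm T B, comp m y = x /\
      forall y' : Hm T B, comp m y' = x -> y' = y.

Definition is_cokernel (B X A : Obj) (m : Hm B X) (p : Hm X A) : Prop :=
  comp p m = 0 /\
  forall (T : Obj) (x : Hm X T), comp x m = 0 ->
    exists y : Hm A T, comp y p = x /\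
      forall y' : Hm A T, comp y' p = x -> y' = y.

Definition kernel_cokernel_pair (B X A : Obj) (m : Hm B X) (p : Hm X A) :=
  is_kernel m p /\ is_cokernel m p.

Definition is_pushout (B X B' X' : Obj) (m : Hm B X) (f : Hm B B')
    (g : Hm X X') (m' : Hm B' X') : Prop :=
  comp g m = comp m' f /\
  forall (T : Obj) (x : Hm X T) (y : Hm B' T), comp x m = comp y f ->
    exists u : Hm X' T, (comp u g = x /\ comp u m' = y) /\
      forall u' : Hm X' T, comp u' g = x -> comp u' m' = y -> u' = u.

Definition is_pullback (X A A' X' : Obj) (p : Hm X A) (f : Hm A' A)
    (g : Hm X' X) (p' : Hm X' A') : Prop :=
  comp p g = comp f p' /\
  forall (T : Obj) (x : Hm T X) (y : Hm T A'), comp p x = comp f y ->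
    exists u : Hm T X', (comp g u = x /\ comp p' u = y) /\
      forall u' : Hm T X', comp g u' = x -> comp p' u' = y -> u' = u.

End Basics.

Record AddCat := {
  add_pre :> PreaddCat;
  zero_object : exists Z : Ob add_pre, idm Z = 0;
  biproducts : forall A B : Ob add_pre, exists (S : Ob add_pre)
      (i1 : Hom add_pre A S) (i2 : Hom add_pre B S)
      (p1 : Hom add_pre S A) (p2 : Hom add_pre S B),
      [/\ comp p1 i1 = idm A, comp p2 i2 = idm B,
          comp p1 i2 = 0, comp p2 i1 = 0 &
          comp i1 p1 + comp i2 p2 = idm S]
}.

Record ExactCat := {
  ex_add :> AddCat;
  conf : forall B X A : Ob ex_add, Hom ex_add B X -> Hom ex_add X A -> Prop;
  conf_kc : forall B X A (m : Hom ex_add B X) (p : Hom ex_add X A),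
      conf m p -> kernel_cokernel_pair m p;
  conf_iso : forall B X A B' X' A' (m : Hom ex_add B X) (p : Hom ex_add X A)
      (m' : Hom ex_add B' X') (p' : Hom ex_add X' A')
      (a : Hom ex_add B B') (b : Hom ex_add X X') (c : Hom ex_add A A'),
      conf m p -> is_iso a -> is_iso b -> is_iso c ->
      comp b m = comp m' a -> comp c p = comp p' b -> conf m' p';
  conf_id_infl : forall A : Ob ex_add,
      exists (Z : Ob ex_add) (p : Hom ex_add A Z), conf (idm A) p;
  conf_id_defl : forall A : Ob ex_add,
      exists (Z : Ob ex_add) (m : Hom ex_add Z A), conf m (idm A);
  conf_infl_comp : forall B X Y (m : Hom ex_add B X) (n : Hom ex_add X Y),
      (exists A (p : Hom ex_add X A), conf m p) ->
      (exists A (p : Hom ex_add Y A), conf n p) ->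
      exists A (p : Hom ex_add Y A), conf (comp n m) p;
  conf_defl_comp : forall X Y A (p : Hom ex_add X Y) (q : Hom ex_add Y A),
      (exists B (m : Hom ex_add B X), conf m p) ->
      (exists B (m : Hom ex_add B Y), conf m q) ->
      exists B (m : Hom ex_add B X), conf m (comp q p);
  conf_pushout : forall B X B' (m : Hom ex_add B X) (f : Hom ex_add B B'),
      (exists A (p : Hom ex_add X A), conf m p) ->
      exists X' (g : Hom ex_add X X') (m' : Hom ex_add B' X'),
        is_pushout m f g m' /\ exists A (p : Hom ex_add X' A), conf m' p;
  conf_pullback : forall X A A' (p : Hom ex_add X A) (f : Hom ex_add A' A),
      (exists B (m : Hom ex_add B X), conf m p) ->
      exists X' (g : Hom ex_add X' X) (p' : Hom ex_add X' A'),
        is_pullback p f g p' /\ exists B (m : Hom ex_add B X'), conf m p'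
}.

Section Ideals.
Variable E : ExactCat.
Local Notation Obj := (Ob E).
Local Notation Hm := (Hom E).

Definition inflation (B X : Obj) (m : Hm B X) : Prop :=
  exists (A : Obj) (p : Hm X A), conf m p.
Definition deflation (X A : Obj) (p : Hm X A) : Prop :=
  exists (B : Obj) (m : Hm B X), conf m p.

Definition morph_class := forall A B : Obj, Hm A B -> Prop.

Definition is_ideal (J : morph_class) : Prop :=
  (forall A B, J A B 0) /\
  (forall A B (f g : Hm A B), J A B f -> J A B g -> J A B (f - g)) /\
  (forall A B X (f : Hm A B) (h : Hm B X), J A B f -> J A X (comp h f)) /\
  (forall A B X (f : Hm A B) (h : Hm X A), J A B f -> J X B (comp f h)).

Definition ideal_cap (J1 J2 : morph_class) : morph_class :=
  fun A B f => J1 A B f /\ J2 A B f.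

Definition ideal_sum (J1 J2 : morph_class) : morph_class :=
  fun A B f => exists g h : Hm A B, J1 A B g /\ J2 A B h /\ f = g + h.

Definition is_preenvelope (J : morph_class) (B Y : Obj) (j : Hm B Y) : Prop :=
  J B Y j /\
  forall (X : Obj) (f : Hm B X), J B X f -> exists g : Hm Y X, comp g j = f.

Definition is_precover (J : morph_class) (Y B : Obj) (j : Hm Y B) : Prop :=
  J Y B j /\
  forall (X : Obj) (f : Hm X B), J X B f -> exists g : Hm X Y, comp j g = f.

Definition monic_preenveloping (J : morph_class) : Prop :=
  forall B : Obj, exists (Y : Obj) (j : Hm B Y), is_preenvelope J j /\ inflation j.

Definition epic_precovering (J : morph_class) : Prop :=
  forall B : Obj, exists (Y : Obj) (j : Hm Y B), is_precover J j /\ deflation j.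

End Ideals.

(* Main.v *)
Require Import Defs.
From mathcomp Require Import all_boot all_algebra.
Set Implicit Arguments. Unset Strict Implicit. Unset Printing Implicit Defensive.
Import GRing.Theory.
Local Open Scope ring_scope.

Section Aux.
Variable E : ExactCat.
Local Notation Obj := (Ob E).
Local Notation Hm := (Defs.Hom E).

Lemma cA (A B C D : Obj) (h : Hm C D) (g : Hm B C) (f : Hm A B) :
  Defs.comp h (Defs.comp g f) = Defs.comp (Defs.comp h g) f.
Proof. exact: Defs.compA. Qed.

Lemma c0m (A B C : Obj) (f : Hm A B) : Defs.comp (0 : Hm B C) f = 0.
Proof.
apply: (addrI (Defs.comp (0 : Hm B C) f)).
by rewrite -Defs.compDl !addr0.
Qed.

Lemma cm0 (A B C : Obj) (g : Hm B C) : Defs.comp g (0 : Hm A B) = 0.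
Proof.
apply: (addrI (Defs.comp g (0 : Hm A B))).
by rewrite -Defs.compDr !addr0.
Qed.

Lemma cNl (A B C : Obj) (g : Hm B C) (f : Hm A B) : Defs.comp (- g) f = - Defs.comp g f.
Proof.
apply: (addrI (Defs.comp g f)).
by rewrite -Defs.compDl !subrr c0m.
Qed.

Lemma cNr (A B C : Obj) (g : Hm B C) (f : Hm A B) : Defs.comp g (- f) = - Defs.comp g f.
Proof.
apply: (addrI (Defs.comp g f)).
by rewrite -Defs.compDr !subrr cm0.
Qed.

Lemma iso_id (A : Obj) : is_iso (idm A).
Proof. by exists (idm A); rewrite Defs.comp1m. Qed.

Lemma infl_iso (B X X' : Obj) (m : Hm B X) (b : Hm X X') :
  inflation m -> is_iso b -> inflation (Defs.comp b m).
Proof.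
move=> [A [p cp]] ib; have [bi [h1 h2]] := ib.
exists A, (Defs.comp p bi).
apply: (conf_iso cp (iso_id B) ib (iso_id A)).
  by rewrite Defs.compm1.
by rewrite Defs.comp1m -cA h1 Defs.compm1.
Qed.

Lemma defl_iso (X X' A : Obj) (p : Hm X A) (b : Hm X' X) :
  deflation p -> is_iso b -> deflation (Defs.comp p b).
Proof.
move=> [B [m cm]] ib; have [bi [h1 h2]] := ib.
have ibi : is_iso bi by exists b.
exists B, (Defs.comp bi m).
apply: (conf_iso cm (iso_id B) ibi (iso_id A)).
  by rewrite Defs.compm1.
by rewrite Defs.comp1m -cA h2 Defs.compm1.
Qed.

Lemma coprod (B Y : Obj) : exists (C : Obj) (e1 : Hm B C) (e2 : Hm Y C),
  inflation e1 /\ forall (T : Obj) (x : Hm Y T) (y : Hm B T),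
    exists u : Hm C T, Defs.comp u e1 = y /\ Defs.comp u e2 = x.
Proof.
have [Z [m cm]] := conf_id_defl Y.
have m0 : m = 0.
  have [[k _] _] := conf_kc cm; by move: k; rewrite Defs.comp1m.
have [C [g [m' [[_ po] im']]]] := conf_pushout (0 : Hm Z B) (ex_intro _ Y (ex_intro _ (idm Y) cm)).
exists C, m', g; split => // T x y.
have [u [[u1 u2] _]] := po T x y (ltac:(by rewrite m0 !cm0)).
by exists u.
Qed.

Lemma prod (B Y : Obj) : exists (C : Obj) (e1 : Hm C B) (e2 : Hm C Y),
  deflation e1 /\ forall (T : Obj) (x : Hm T Y) (y : Hm T B),
    exists u : Hm T C, Defs.comp e1 u = y /\ Defs.comp e2 u = x.
Proof.
have [Z [p cp]] := conf_id_infl Y.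
have p0 : p = 0.
  have [_ [k _]] := conf_kc cp; by move: k; rewrite Defs.compm1.
have [C [g [p' [[_ pb] ip']]]] := conf_pullback (0 : Hm B Z) (ex_intro _ Y (ex_intro _ (idm Y) cp)).
exists C, p', g; split => // T x y.
have [u [[u1 u2] _]] := pb T x y (ltac:(by rewrite p0 !c0m)).
by exists u.
Qed.

End Aux.

Theorem proposition2p2 (E : ExactCat) (J1 J2 : morph_class E) :
  is_ideal J1 -> is_ideal J2 ->
  (monic_preenveloping J1 -> monic_preenveloping J2 ->
     monic_preenveloping (ideal_cap J1 J2) /\
     monic_preenveloping (ideal_sum J1 J2)) /\
  (epic_precovering J1 -> epic_precovering J2 ->
     epic_precovering (ideal_cap J1 J2) /\
     epic_precovering (ideal_sum J1 J2)).
Proof.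
move=> [I10 [I1B [I1l I1r]]] [I20 [I2B [I2l I2r]]]; split.
- move=> M1 M2; split => B.
  + have [Y1 [j1 [[J1j1 P1] inf1]]] := M1 B.
    have [Y2 [j2 [[J2j2 P2] inf2]]] := M2 B.
    have [W [g [n [[eq po] infn]]]] := conf_pushout j2 inf1.
    exists W, (Defs.comp n j2); split; last exact: conf_infl_comp inf2 infn.
    split.
      split; last exact: I2l.
      rewrite -eq; exact: I1l.
    move=> X f [f1 f2].
    have [a [ha]] := P1 X f f1; have [b [hb]] := P2 X f f2.
    have [u [[u1 u2] _]] := po X a b (ltac:(by rewrite ha hb)).
    by exists u; rewrite cA u2.
  + have [Y1 [j1 [[J1j1 P1] inf1]]] := M1 B.
    have [Y2 [j2 [[J2j2 P2] inf2]]] := M2 B.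
    have [C [e1 [e2 [ie1 cu]]]] := coprod B Y2.
    have [q1 [q11 q12]] := cu B 0 (idm B).
    set a := Defs.comp e2 (Defs.comp j2 q1).
    have aa : Defs.comp a a = 0.
      by rewrite /a -!cA (cA q1 e2) q12 c0m !cm0.
    have ith : is_iso (idm C + a).
      exists (idm C - a); split.
        by rewrite Defs.compDl Defs.comp1m cNl Defs.compDr Defs.compm1 aa addr0 addrK.
      by rewrite Defs.compDr Defs.compm1 cNr Defs.compDl Defs.comp1m aa addr0 addrK.
    have es : Defs.comp (idm C + a) e1 = e1 + Defs.comp e2 j2.
      by rewrite Defs.compDl Defs.comp1m /a -!cA q11 Defs.compm1.
    have is1 := infl_iso ie1 ith; rewrite es in is1.
    have [W [g [n [[eq po] infn]]]] := conf_pushout e1 inf1.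
    exists W, (Defs.comp n (e1 + Defs.comp e2 j2)); split; last exact: conf_infl_comp is1 infn.
    split.
      exists (Defs.comp g j1), (Defs.comp (Defs.comp n e2) j2); split; first exact: I1l.
      split; first exact: I2l.
      by rewrite Defs.compDr eq cA.
    move=> X f [f1 [f2 [Jf1 [Jf2 ->]]]].
    have [a1 ha1] := P1 X f1 Jf1; have [a2 ha2] := P2 X f2 Jf2.
    have [y1 [y11 y12]] := cu X 0 f1.
    have [u1 [[u11 u12] _]] := po X a1 y1 (ltac:(by rewrite ha1 y11)).
    have [y2 [y21 y22]] := cu X a2 0.
    have [u2 [[u21 u22] _]] := po X 0 y2 (ltac:(by rewrite y21 c0m)).
    exists (u1 + u2).
    rewrite Defs.compDl !cA u12 u22 !Defs.compDr y11 y21 !cA y12 y22 c0m ha2.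
    by rewrite addr0 add0r.
- move=> M1 M2; split => B.
  + have [Y1 [j1 [[J1j1 P1] inf1]]] := M1 B.
    have [Y2 [j2 [[J2j2 P2] inf2]]] := M2 B.
    have [W [g [n [[eq pb] infn]]]] := conf_pullback j2 inf1.
    exists W, (Defs.comp j2 n); split; last exact: conf_defl_comp infn inf2.
    split.
      split; last exact: I2r.
      rewrite -eq; exact: I1r.
    move=> X f [f1 f2].
    have [a [ha]] := P1 X f f1; have [b [hb]] := P2 X f f2.
    have [u [[u1 u2] _]] := pb X a b (ltac:(by rewrite ha hb)).
    by exists u; rewrite -cA u2.
  + have [Y1 [j1 [[J1j1 P1] inf1]]] := M1 B.
    have [Y2 [j2 [[J2j2 P2] inf2]]] := M2 B.
    have [C [e1 [e2 [ie1 cu]]]] := prod B Y2.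
    have [q1 [q11 q12]] := cu B 0 (idm B).
    set a := Defs.comp q1 (Defs.comp j2 e2).
    have aa : Defs.comp a a = 0.
      by rewrite /a -!cA (cA e2 q1) q12 c0m !cm0.
    have ith : is_iso (idm C + a).
      exists (idm C - a); split.
        by rewrite Defs.compDl Defs.comp1m cNl Defs.compDr Defs.compm1 aa addr0 addrK.
      by rewrite Defs.compDr Defs.compm1 cNr Defs.compDl Defs.comp1m aa addr0 addrK.
    have es : Defs.comp e1 (idm C + a) = e1 + Defs.comp j2 e2.
      by rewrite Defs.compDr Defs.compm1 /a cA q11 Defs.comp1m.
    have is1 := defl_iso ie1 ith; rewrite es in is1.
    have [W [g [n [[eq pb] infn]]]] := conf_pullback e1 inf1.
    exists W, (Defs.comp (e1 + Defs.comp j2 e2) n); split; last exact: conf_defl_comp infn is1.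
    split.
      exists (Defs.comp j1 g), (Defs.comp j2 (Defs.comp e2 n)); split; first exact: I1r.
      split; first exact: I2r.
      by rewrite Defs.compDl eq cA.
    move=> X f [f1 [f2 [Jf1 [Jf2 ->]]]].
    have [a1 ha1] := P1 X f1 Jf1; have [a2 ha2] := P2 X f2 Jf2.
    have [y1 [y11 y12]] := cu X 0 f1.
    have [u1 [[u11 u12] _]] := pb X a1 y1 (ltac:(by rewrite ha1 y11)).
    have [y2 [y21 y22]] := cu X a2 0.
    have [u2 [[u21 u22] _]] := pb X 0 y2 (ltac:(by rewrite y21 cm0)).
    exists (u1 + u2).
    rewrite Defs.compDr -!cA u12 u22 !Defs.compDl y11 y21 -!cA y12 y22 cm0 ha2.
    by rewrite addr0 add0r.
Qed.
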